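(* Let $p$ be a positive integer and $q$ a positive even integer with $p/q\in[2.5,3)$. Then there exists a fractional clique $x$ of the Kneser graph $K_{p/q}$ of weight $p/q$ such that $x(v)=\binom{p-q}{q}^{-1}$ for every neighbor $v$ of the vertex $[q]=\{1,\dots,q\}$.
   Context: For integers $1\le q\le p$, the Kneser graph $K_{p/q}$ has as vertices all $q$-element subsets of $[p]=\{1,\dots,p\}$, two being adjacent iff they are disjoint. A fractional clique of a graph $G$ is a map $x:V(G)\to[0,1]$ such that $\sum_{v\in I}x(v)\le 1$ for every independent set $I$ of $G$; its weight is $\sum_{v\in V(G)}x(v)$. *)

(* Defs.v *)
From HB Require Import structures.
From mathcomp Require Import all_boot all_order all_algebra.
Set Implicit Arguments. Unset Strict Implicit. Unset Printing Implicit Defensive.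
Import Order.TTheory GRing.Theory Num.Theory.

Definition kvert (p q : nat) := {A : {set 'I_p} | #|A| == q}.

Definition kadj (p q : nat) (u v : kvert p q) : bool :=
  (u != v) && [disjoint val u & val v].

Definition kindependent (p q : nat) (I : {set kvert p q}) : bool :=
  [forall u in I, forall v in I, ~~ kadj u v].

Local Open Scope ring_scope.

Definition fractional_clique (R : realFieldType) (p q : nat)
    (x : kvert p q -> R) : Prop :=
  (forall v, 0 <= x v <= 1) /\
  (forall I : {set kvert p q}, kindependent I -> \sum_(v in I) x v <= 1).

Definition weight (R : realFieldType) (p q : nat) (x : kvert p q -> R) : R :=
  \sum_(v : kvert p q) x v.

(* The vertex [q] = {1,...,q}, i.e. {0,...,q-1} in 'I_p. *)
Definition firstq (p q : nat) : {set 'I_p} := [set i : 'I_p | (i < q)%N].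

(* Main.v *)
Require Import Defs.
From HB Require Import structures.
From mathcomp Require Import all_boot all_order all_algebra all_fingroup zify ring lra.
Import Order.TTheory GRing.Theory Num.Theory.
Set Implicit Arguments. Unset Strict Implicit. Unset Printing Implicit Defensive.


Lemma modP3 (w x : nat) : 0 < w -> x < 3 * w ->
  (x %% w = x /\ x < w) \/ (x %% w = x - w /\ w <= x < 2 * w) \/
  (x %% w = x - 2 * w /\ 2 * w <= x).
Proof.
move=> w0 hx.
case: (ltnP x w) => h1; first by left; rewrite modn_small.
case: (ltnP x (2 * w)) => h2.
  right; left; split; last lia.
  have -> : x = 1 * w + (x - w) by lia.
  by rewrite modnMDl modn_small; lia.
right; right; split; last lia.
have -> : x = 2 * w + (x - 2 * w) by lia.
by rewrite modnMDl modn_small; lia.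
Qed.

Lemma modQ3 (w x : nat) : 0 < w -> x < 3 * w ->
  (x = x %% w) \/ (x = x %% w + w) \/ (x = x %% w + 2 * w).
Proof. move=> w0 hx; have := @modP3 w x w0 hx; lia. Qed.
Lemma modQ2 (w x : nat) : 0 < w -> x < 2 * w ->
  (x = x %% w) \/ (x = x %% w + w).
Proof. move=> w0 hx; have := @modP3 w x w0; lia. Qed.

Lemma modP2 (w x : nat) : 0 < w -> x < 2 * w ->
  (x %% w = x /\ x < w) \/ (x %% w = x - w /\ w <= x).
Proof. move=> w0 hx; have := @modP3 w x w0; lia. Qed.

Ltac elim_mod w :=
  repeat match goal with
  | |- context [?x %% w] =>
     lazymatch x with context [_ %% w] => fail | _ => idtac end;
     let H := fresh "Hm" in
     let H0 := fresh "H0" in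
     assert (H0 : 0 < w) by lia;
     tryif (assert (H : x < 2 * w) by lia) then
     (pose proof (@modQ2 w x H0 H) as Hx; pose proof (@ltn_pmod x w H0); clear H H0;
     generalize dependent (x %% w); intros;
     destruct Hx as [?|?])
     else
     (assert (H : x < 3 * w) by lia;
     pose proof (@modQ3 w x H0 H) as Hx; pose proof (@ltn_pmod x w H0); clear H H0;
     generalize dependent (x %% w); intros;
     destruct Hx as [?|[?|?]])
  | Hy : context [_ %% w] |- _ => revert Hy
  end.

Ltac elim_mod_old w :=
  repeat match goal with
  | |- context [?x %% w] =>
     lazymatch x with context [_ %% w] => fail | _ => idtac end;
     let H := fresh "Hm" in
     have H := @modP3 w x;
     generalize dependent (x %% w); intros;
     (lapply H; [clear H; intro H; lapply H; [clear H; intro H | lia] | lia]);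
     destruct H as [[? ?]|[[? ?]|[? ?]]]
  end.

Section Core.
Variables (w q h e : nat).
Hypotheses (Hq : q = h + h) (Hh : 0 < h) (Hhe : h <= e) (Heq : e < q) (Hw : w = q + e).

Definition addm a b := (a + b) %% w.
Definition disjXY s t := forall j k, j < q -> k < h -> addm s j <> addm t k.
Definition disjYY t1 t2 := forall k k', k < h -> k' < h -> addm t1 k <> addm t2 k'.

Lemma F1 t : t < w -> disjYY t (addm t h).
Proof.
move=> tw k k' hk hk'; rewrite /addm. elim_mod w; lia.
Qed.

Lemma F2 t k0 : t < w -> k0 <= e - h -> disjXY (addm t (h + k0)) t.
Proof.
move=> tw hk j k hj hk'; rewrite /addm. elim_mod w; lia.
Qed.

Ltac gen_c := match goal with |- context [?w + ?h - 1 - ?u] =>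
  let c := fresh "c" in let hc := fresh "hc" in
  have hc : (w + h - 1 - u) + u = w + h - 1 by lia;
  generalize dependent (w + h - 1 - u); intros c hc; intros end.

Definition mm u0 t := (t + (w + h - 1 - u0)) %% w.

Lemma B1 u0 t : u0 < w -> t < w -> ~ disjYY t u0 -> mm u0 t <= h + h - 2.
Proof.
move=> hu ht H; case: (leqP (mm u0 t) (h+h-2)) => // Hgt; exfalso.
apply: H => k k' hk hk'; move: Hgt; rewrite /addm /mm; gen_c; elim_mod w; lia.
Qed.

Lemma B1' u0 t : u0 < w -> t < w -> ~ disjYY u0 t -> mm u0 t <= h + h - 2.
Proof.
move=> hu ht H; case: (leqP (mm u0 t) (h+h-2)) => // Hgt; exfalso.
apply: H => k k' hk hk'; move: Hgt; rewrite /addm /mm; gen_c; elim_mod w; lia.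
Qed.

Lemma B2 u0 ts t k0 : u0 < w -> ts < w -> t < w -> mm u0 ts <= h + h - 2 ->
  mm u0 t <= mm u0 ts -> k0 < e - h -> addm ts (h + 1 + k0) <> addm t h.
Proof.
move=> hu hts ht hb hm hk; move: hb hm; rewrite /addm /mm; gen_c; elim_mod w; lia.
Qed.

Definition gg x := if x < h then x else x - h.

Lemma B3 u0 u u' : u0 < w -> u < w -> u' < w -> mm u0 u <= h + h - 2 ->
  mm u0 u' <= h + h - 2 -> ~ disjYY u u' -> gg (mm u0 u) = gg (mm u0 u') -> u = u'.
Proof.
move=> hu0 hu hu' b1 b2 H E; case: (eqVneq u u') => // /eqP Hne; exfalso.
move: H b1 b2 E; rewrite /gg.
case: (ltnP (mm u0 u) h) => c1; case: (ltnP (mm u0 u') h) => c2 H b1 b2 E.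
- move: Hne c1 c2 b1 b2 E; rewrite /mm; gen_c; elim_mod w; lia.
- apply: H => k k' hk hk'; move: Hne c1 c2 b1 b2 E; rewrite /addm /mm; gen_c; elim_mod w; lia.
- apply: H => k k' hk hk'; move: Hne c1 c2 b1 b2 E; rewrite /addm /mm; gen_c; elim_mod w; lia.
- move: Hne c1 c2 b1 b2 E; rewrite /mm; gen_c; elim_mod w; lia.
Qed.

Lemma addm_inj t a b : t < w -> a < w -> b < w -> addm t a = addm t b -> a = b.
Proof. move=> ht ha hb; rewrite /addm; elim_mod w; lia. Qed.

Lemma addm_injl t t' a : t < w -> t' < w -> a < w -> addm t a = addm t' a -> t = t'.
Proof. move=> ht ht' ha; rewrite /addm; elim_mod w; lia. Qed.

Lemma w_gt0 : 0 < w. Proof. lia. Qed.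
Definition sh a (t : 'I_w) : 'I_w := Ordinal (ltn_pmod (t + a) w_gt0).

Lemma sh_inj a : a < w -> injective (sh a).
Proof. move=> ha x y /(congr1 val) /= E; apply: val_inj; exact: addm_injl E. Qed.

Lemma disjP (T : finType) (A B : {set T}) :
  (forall x, x \in A -> x \in B -> False) -> [disjoint A & B].
Proof.
move=> H; rewrite -setI_eq0; apply/eqP/setP => x; rewrite !inE.
by apply/negP => /andP[a b]; exact: H a b.
Qed.

Lemma card_disj2 (A B : {set 'I_w}) : [disjoint A & B] -> #|A| + #|B| <= w.
Proof.
move=> d; rewrite -cardsUI (_ : A :&: B = set0) ?cards0 ?addn0; last exact/disjoint_setI0.
by apply: leq_trans (max_card _) _; rewrite card_ord.
Qed.

Lemma card_disj3 (A B C : {set 'I_w}) : [disjoint A & B] -> [disjoint A & C] ->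
  [disjoint B & C] -> #|A| + #|B| + #|C| <= w.
Proof.
move=> dAB dAC dBC.
have -> : #|A| + #|B| = #|A :|: B|.
  by rewrite -cardsUI (_ : A :&: B = set0) ?cards0 ?addn0 //; exact/disjoint_setI0.
apply: card_disj2; apply: disjP => x; rewrite inE => /orP [] hx hC.
  by move/disjoint_setI0/setP/(_ x): dAC; rewrite !inE hx hC.
by move/disjoint_setI0/setP/(_ x): dBC; rewrite !inE hx hC.
Qed.

Lemma core (S T1 T2 : {set 'I_w}) (b : bool) :
  (forall s t, s \in S -> t \in T1 :|: T2 -> ~ disjXY s t) ->
  (forall t1 t2, t1 \in T1 -> t2 \in T2 -> ~ disjYY t1 t2) ->
  (b -> S = set0) ->
  q * #|S| + e * (#|T1| + #|T2|) + (q - e) * w * b <= q * w.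
Proof.
move=> H1 H2 H3.
have hhw : h < w by lia.
case: b H3 => [H3|_].
  rewrite (H3 erefl) cards0.
  have dj : [disjoint sh h @: T1 & T2].
    apply: disjP => x /imsetP [t1 ht1 ->] ht2.
    exact: (H2 t1 _ ht1 ht2 (F1 (ltn_ord t1))).
  have := card_disj2 dj; rewrite card_imset; last exact: sh_inj.
  move=> le; have := leq_mul (leqnn e) le.
  have E : (q - e) * w + e * w = q * w by rewrite -mulnDl subnK // ltnW.
  rewrite /= muln1 muln0 add0n => hh; by rewrite -E addnC leq_add2l.
rewrite muln0 addn0.
set T := T1 :|: T2; set U := T1 :&: T2.
have hTU : #|T| + #|U| = #|T1| + #|T2| by rewrite cardsUI.
have dST : [disjoint S & sh h @: T].
  apply: disjP => x hx /imsetP [t ht E].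
  apply: (H1 x t hx ht); rewrite E /= -[h]addn0; apply: F2 => //; lia.
have cT : #|sh h @: T| = #|T| by rewrite card_imset //; apply: sh_inj.
case: (set_0Vmem U) => [U0 | [u0 hu0]].
  rewrite U0 cards0 addn0 in hTU.
  have := card_disj2 dST; rewrite cT -hTU => le.
  have := leq_mul (leqnn q) le; nia.
have u0T1 : u0 \in T1 by move: hu0; rewrite inE => /andP[].
have u0T2 : u0 \in T2 by move: hu0; rewrite inE => /andP[].
have u0T : u0 \in T by rewrite inE u0T1.
have ball : forall t, t \in T -> mm u0 t <= h + h - 2.
  move=> t; case/setUP => ht.
    exact: (B1 (ltn_ord u0) (ltn_ord t) (H2 t u0 ht u0T2)).
  exact: (B1' (ltn_ord u0) (ltn_ord t) (H2 u0 t u0T1 ht)).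
case: (@arg_maxnP _ u0 (mem T) (fun t => mm u0 t) u0T) => ts hts hmax.
set K := [set sh (h + 1 + k0) ts | k0 : 'I_(e - h)].
have cK : #|K| = e - h.
  rewrite card_imset ?card_ord // => k0 k1 /(congr1 val) /= E.
  apply: val_inj; have hk0 := ltn_ord k0; have hk1 := ltn_ord k1.
  have b0 : h + 1 + k0 < w by lia.
  have b1 : h + 1 + k1 < w by lia.
  by move: (addm_inj (ltn_ord ts) b0 b1 E) => /addnI.
have dKS : [disjoint K & S].
  apply: disjP => x /imsetP [k0 _ ->] hx.
  apply: (H1 _ ts hx hts) => /=.
  rewrite -addnA; apply: F2 => //; have := ltn_ord k0; lia.
have dKT : [disjoint K & sh h @: T].
  apply: disjP => x /imsetP [k0 _ ->] /imsetP [t ht] /(congr1 val) /= E.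
  apply: (B2 (ltn_ord u0) (ltn_ord ts) (ltn_ord t) (ball _ hts) (hmax _ ht) (ltn_ord k0) E).
have le1 : #|S| + #|T| + #|K| <= w.
  rewrite -cT; apply: card_disj3 => //; first by rewrite disjoint_sym.
  by rewrite disjoint_sym.
have hU : #|U| <= h.
  have gh : forall u, u \in U -> gg (mm u0 u) < h.
    move=> u hu; have : u \in T by move: hu; rewrite !inE => /andP[->].
    move=> /ball; rewrite /gg; case: ifP => //; lia.
  pose f (u : 'I_w) : 'I_h := Ordinal (ltn_pmod (gg (mm u0 u)) Hh).
  rewrite -(card_in_imset (f := f)); first by apply: leq_trans (max_card _) _; rewrite card_ord.
  move=> u u' hu hu' /(congr1 val) /=; rewrite !modn_small ?gh // => E.
  have uT : u \in T by move: hu; rewrite !inE => /andP[->].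
  have u'T : u' \in T by move: hu'; rewrite !inE => /andP[->].
  apply: val_inj; apply: (B3 (ltn_ord u0) (ltn_ord u) (ltn_ord u') (ball _ uT) (ball _ u'T)) => //.
  apply: H2; first by move: hu; rewrite !inE => /andP[].
  by move: hu'; rewrite !inE => /andP[].
have hUT : #|U| <= #|T|.
  apply: subset_leq_card; apply/subsetP => x; rewrite !inE => /andP[-> _] //.
rewrite cK in le1.
have := leq_mul (leqnn q) le1.
nia.
Qed.
End Core.


Section Kneser.
Variables (n q h : nat).
Hypotheses (Hq : q = h + h) (Hh : 0 < h) (H5 : 5 * q <= 2 * n.+1) (H3 : n.+1 < 3 * q).
Local Notation p := n.+1.
Definition w := p - q.
Definition e := p - q - q.
Lemma Hw : w = q + e. Proof. rewrite /w /e; lia. Qed.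
Lemma Hhe : h <= e. Proof. rewrite /e; lia. Qed.
Lemma Heq : e < q. Proof. rewrite /e; lia. Qed.
Lemma wpos : 0 < w. Proof. rewrite /w; lia. Qed.

Let ad := addm w.
Definition pt (x : nat) : 'I_p := inord (q + x).
Definition Xs (s : 'I_w) : {set 'I_p} := [set pt (ad s j) | j : 'I_q].
Definition half (b : bool) : {set 'I_p} :=
  [set (inord (if b then h + k else k) : 'I_p) | k : 'I_h].
Definition Ys (b : bool) (t : 'I_w) : {set 'I_p} :=
  half b :|: [set pt (ad t k) | k : 'I_h].
Definition fq := firstq p q.

Lemma ad_lt a b : ad a b < w. Proof. exact: ltn_pmod wpos. Qed.
Lemma pt_val x : x < w -> (pt x : nat) = q + x.
Proof. move=> hx; rewrite /pt inordK //; move: hx; rewrite /w; lia. Qed.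
Lemma pt_inj x y : x < w -> y < w -> pt x = pt y -> x = y.
Proof. by move=> hx hy /(congr1 (@nat_of_ord _)); rewrite !pt_val //; move/addnI. Qed.
Lemma half_val b k : k < h -> ((inord (if b then h + k else k) : 'I_p) : nat) = if b then h + k else k.
Proof. move=> hk; rewrite inordK //; case: b; lia. Qed.

Lemma card_Xs s : #|Xs s| = q.
Proof.
rewrite card_imset ?card_ord // => j j' E; apply: val_inj.
have E' := pt_inj (ad_lt _ _) (ad_lt _ _) E.
have hj : j < w by have := ltn_ord j; rewrite Hw; lia.
have hj' : j' < w by have := ltn_ord j'; rewrite Hw; lia.
exact: (addm_inj Hq Hh Hhe Heq Hw (ltn_ord s) hj hj' E').
Qed.

Lemma Xs_W s x : x \in Xs s -> q <= x.
Proof. by case/imsetP => j _ ->; rewrite pt_val ?ad_lt // leq_addr. Qed.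
Lemma arc_W t x : x \in [set pt (ad t k) | k : 'I_h] -> q <= x.
Proof. by case/imsetP => j _ ->; rewrite pt_val ?ad_lt // leq_addr. Qed.
Lemma half_lt b x : x \in half b -> x < q.
Proof. case/imsetP => k _ ->; rewrite half_val //; have := ltn_ord k; case: b; lia. Qed.

Lemma card_half b : #|half b| = h.
Proof.
rewrite card_imset ?card_ord // => k k' /(congr1 (@nat_of_ord _)).
rewrite !half_val // => E; apply: val_inj => /=; case: b E; lia.
Qed.

Lemma card_arc (t : 'I_w) : #|[set pt (ad t k) | k : 'I_h]| = h.
Proof.
rewrite card_imset ?card_ord // => j j' E; apply: val_inj.
have E' := pt_inj (ad_lt _ _) (ad_lt _ _) E.
have hj : j < w by have := ltn_ord j; rewrite Hw; lia.
have hj' : j' < w by have := ltn_ord j'; rewrite Hw; lia.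
exact: (addm_inj Hq Hh Hhe Heq Hw (ltn_ord t) hj hj' E').
Qed.


Lemma disjPn (T : finType) (A B : {set T}) x : [disjoint A & B] -> x \in A -> x \in B -> False.
Proof. by move=> /disjoint_setI0/setP/(_ x); rewrite !inE => E hA hB; rewrite hA hB in E. Qed.

Lemma card_Ys b t : #|Ys b t| = q.
Proof.
rewrite cardsU card_half card_arc (_ : _ :&: _ = set0) ?cards0 ?subn0 //.
apply/disjoint_setI0/disjP => x /half_lt h1 /arc_W; lia.
Qed.

Lemma half_fq b : half b \subset fq.
Proof. by apply/subsetP => x /half_lt hx; rewrite inE. Qed.

Lemma half_n0 b : exists x, x \in half b.
Proof. by exists (inord (if b then h + 0 else 0)); apply/imsetP; exists (Ordinal Hh). Qed.

Lemma Xs_fq s : [disjoint Xs s & fq].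
Proof. by apply: disjP => x /Xs_W hx; rewrite inE ltnNge hx. Qed.

Lemma disjXY_disj (s t : 'I_w) b : disjXY w q h s t -> [disjoint Xs s & Ys b t].
Proof.
move=> D; apply: disjP => x hx; case/setUP.
  by move/half_lt; have := Xs_W hx; lia.
case/imsetP: hx => j _ -> /imsetP [k _ /pt_inj E].
exact: (D j k (ltn_ord j) (ltn_ord k) (E (ad_lt _ _) (ad_lt _ _))).
Qed.

Lemma disjYY_disj (t1 t2 : 'I_w) : disjYY w h t1 t2 -> [disjoint Ys false t1 & Ys true t2].
Proof.
move=> D; apply: disjP => x; case/setUP => hx; case/setUP => hy.
- case/imsetP: hx => k _ E; rewrite E in hy; case/imsetP: hy => k' _ /(congr1 (@nat_of_ord _)) /=.
  have hk := ltn_ord k; have hk' := ltn_ord k'; rewrite !inordK; lia.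
- by move: (half_lt hx) (arc_W hy); lia.
- by move: (half_lt hy) (arc_W hx); lia.
- case/imsetP: hx => k _ E0; rewrite E0 in hy; case/imsetP: hy => k' _ /pt_inj E.
  exact: (D k k' (ltn_ord k) (ltn_ord k') (E (ad_lt _ _) (ad_lt _ _))).
Qed.

Lemma card_fq : #|fq| = q.
Proof.
have hqp : q <= p by lia.
have winj : injective (widen_ord hqp) by move=> x y /(congr1 val) /= /val_inj.
rewrite -[RHS]card_ord -(card_imset _ winj); apply: eq_card => x.
rewrite inE; apply/idP/imsetP => [hx|[k _ ->]] /=; last exact: ltn_ord.
by exists (Ordinal hx) => //; apply: val_inj.
Qed.

Definition v0 : kvert p q := exist _ fq (introT eqP card_fq).
Definition mk (A : {set 'I_p}) : kvert p q := insubd v0 A.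
Lemma mkK (A : {set 'I_p}) : #|A| = q -> val (mk A) = A.
Proof. by move=> hA; rewrite /mk insubdK //; apply/eqP. Qed.

Definition G : {set {perm 'I_p}} := [set s : {perm 'I_p} | [forall i : 'I_p, (i < q) ==> (s i == i)]].
Lemma GP (s : {perm 'I_p}) : s \in G -> forall i : 'I_p, i < q -> s i = i.
Proof. by rewrite inE => /forallP H i hi; move: (H i); rewrite hi => /eqP. Qed.
Lemma G_W (s : {perm 'I_p}) (x : 'I_p) : s \in G -> q <= x -> q <= s x.
Proof.
move=> hs hx; case: (leqP q (s x)) => // hsx.
have := GP hs hsx; move/perm_inj => E; move: hsx; rewrite E; lia.
Qed.

Lemma imset_disj (s : {perm 'I_p}) (A B : {set 'I_p}) : [disjoint A & B] -> [disjoint s @: A & s @: B].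
Proof.
move=> d; apply: disjP => x /imsetP [a ha ->] /imsetP [b hb /perm_inj E].
by rewrite E in ha; exact: disjPn d ha hb.
Qed.
Lemma card_pimset (s : {perm 'I_p}) (A : {set 'I_p}) : #|s @: A| = #|A|.
Proof. exact/card_imset/perm_inj. Qed.

Lemma adj_disj (u v : kvert p q) : [disjoint val u & val v] -> kadj u v.
Proof.
move=> d; rewrite /kadj d andbT; apply/eqP => E; rewrite E in d.
move/disjoint_setI0: d; rewrite setIid => E0.
by move: (valP v); rewrite /= E0 cards0 => /eqP; lia.
Qed.

Lemma indep_nadj (I : {set kvert p q}) (u v : kvert p q) : kindependent I -> u \in I -> v \in I -> ~~ kadj u v.
Proof. by move=> /forallP H hu hv; move: (H u); rewrite hu => /forallP/(_ v); rewrite hv. Qed.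

Lemma Xs_G (s : {perm 'I_p}) (t : 'I_w) : s \in G -> [disjoint s @: Xs t & fq].
Proof.
move=> hs; apply: disjP => x /imsetP [a ha ->]; rewrite inE.
by have := G_W hs (Xs_W ha); lia.
Qed.

Variable R : realFieldType.
Local Open Scope ring_scope.

Definition al : R := (w%:R)^-1.
Definition be : R := e%:R / (q%:R * w%:R).
Definition ga : R := (q - e)%:R / q%:R.

Definition y (s : {perm 'I_p}) (v : kvert p q) : R :=
  al * \sum_(t : 'I_w) (v == mk (s @: Xs t))%:R
  + be * \sum_(b : bool) \sum_(t : 'I_w) (v == mk (s @: Ys b t))%:R
  + ga * (v == v0)%:R.

Lemma sumC (I J : finType) (F : I -> J -> R) :
  \sum_(i : I) \sum_(j : J) F i j = \sum_(j : J) \sum_(i : I) F i j.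
Proof. exact: exchange_big. Qed.
Lemma sumC_in (I J : finType) (A : {set I}) (F : I -> J -> R) :
  \sum_(i in A) \sum_(j : J) F i j = \sum_(j : J) \sum_(i in A) F i j.
Proof. exact: exchange_big. Qed.

Lemma sum_eq1 (T : finType) (c : T) : \sum_(v : T) ((v == c)%:R : R) = 1.
Proof.
rewrite (bigD1 c) //= eqxx big1 ?addr0 // => v /negbTE ->; done.
Qed.

Lemma sum_in (T : finType) (I : {set T}) (c : T) :
  \sum_(v in I) ((v == c)%:R : R) = (c \in I)%:R.
Proof.
case: (boolP (c \in I)) => hc.
  rewrite (bigD1 c) //= eqxx big1 ?addr0 // => v /andP [_ /negbTE ->]; done.
rewrite big1 // => v hv; case: eqP => // E; by rewrite -E hv in hc.
Qed.

Lemma sum_card (T : finType) (P : pred T) :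
  \sum_(t : T) ((P t)%:R : R) = #|[set t | P t]|%:R.
Proof.
rewrite -sum1_card natr_sum [RHS]big_mkcond /=; apply: eq_bigr => t _.
by rewrite inE; case: (P t).
Qed.

Lemma qpos : (0 : R) < q%:R. Proof. rewrite ltr0n; lia. Qed.
Lemma wposR : (0 : R) < w%:R. Proof. rewrite ltr0n; exact: wpos. Qed.

Lemma sum_y s : \sum_v y s v = p%:R / q%:R.
Proof.
rewrite !big_split /= -!mulr_sumr.
have A1 : \sum_v \sum_(t : 'I_w) ((v == mk (s @: Xs t))%:R : R) = w%:R.
  rewrite sumC (eq_bigr (fun _ => 1)) => [|t _]; last exact: sum_eq1.
  by rewrite sumr_const card_ord.
have A2 : \sum_v \sum_(b : bool) \sum_(t : 'I_w) ((v == mk (s @: Ys b t))%:R : R) = w%:R *+ 2.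
  rewrite sumC (eq_bigr (fun _ => w%:R)) => [|b _].
    by rewrite sumr_const card_bool.
  rewrite sumC (eq_bigr (fun _ => 1)) => [|t _]; last exact: sum_eq1.
  by rewrite sumr_const card_ord.
rewrite A1 A2 sum_eq1.
have hw : (w%:R : R) = q%:R + e%:R by rewrite Hw natrD.
have hp : (p%:R : R) = q%:R + q%:R + e%:R.
  by rewrite -!natrD; congr (_%:R); rewrite /e; lia.
have hqe : ((q - e)%:R : R) = q%:R - e%:R by rewrite natrB // ltnW // Heq.
rewrite /al /be /ga hqe hp.
have wn0 : (w%:R : R) != 0 by rewrite gt_eqF // wposR.
have qn0 : (q%:R : R) != 0 by rewrite gt_eqF // qpos.
rewrite mulr2n mulr1; field.
by rewrite qn0 wn0.
Qed.

Lemma y_ge0 s v : 0 <= y s v.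
Proof.
have ha : 0 <= al by rewrite /al invr_ge0 ler0n.
have hb : 0 <= be.
  rewrite /be; apply: mulr_ge0; first exact: ler0n.
  by rewrite invr_ge0; apply: mulr_ge0; exact: ler0n.
have hg : 0 <= ga.
  rewrite /ga; apply: mulr_ge0; first exact: ler0n.
  by rewrite invr_ge0; exact: ler0n.
rewrite /y; apply: addr_ge0; first apply: addr_ge0.
all: apply: mulr_ge0 => //.
all: try (apply: sumr_ge0 => b _); try (apply: sumr_ge0 => t _); exact: ler0n.
Qed.

Lemma valmkXs (s : {perm 'I_p}) t : val (mk (s @: Xs t)) = s @: Xs t.
Proof. by rewrite mkK // card_pimset card_Xs. Qed.
Lemma valmkYs (s : {perm 'I_p}) b t : val (mk (s @: Ys b t)) = s @: Ys b t.
Proof. by rewrite mkK // card_pimset card_Ys. Qed.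

Lemma sum_in_card (I : {set kvert p q}) (f : 'I_w -> kvert p q) :
  \sum_(v in I) \sum_(t : 'I_w) ((v == f t)%:R : R) = #|[set t | f t \in I]|%:R.
Proof.
rewrite sumC_in (eq_bigr (fun t => (f t \in I)%:R)) => [|t _]; [exact: sum_card | exact: sum_in].
Qed.

Lemma y_indep (s : {perm 'I_p}) (I : {set kvert p q}) : s \in G -> kindependent I -> \sum_(v in I) y s v <= 1.
Proof.
move=> hs hI.
set S := [set t : 'I_w | mk (s @: Xs t) \in I].
set T0 := [set t : 'I_w | mk (s @: Ys false t) \in I].
set T1 := [set t : 'I_w | mk (s @: Ys true t) \in I].
have key := @core _ _ _ _ Hq Hh Hhe Heq Hw S T0 T1 (v0 \in I).
have {key} key : (q * #|S| + e * (#|T0| + #|T1|) + (q - e) * w * (v0 \in I) <= q * w)%N.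
  apply: key.
  - move=> t u; rewrite !inE => ht hu D.
    have [b hb] : exists b, mk (s @: Ys b u) \in I by case/orP: hu => hu; [exists false | exists true].
    have := indep_nadj hI ht hb; rewrite adj_disj //.
    by rewrite valmkXs valmkYs; apply: imset_disj; apply: disjXY_disj.
  - move=> t u; rewrite !inE => ht hu D.
    have := indep_nadj hI ht hu; rewrite adj_disj //.
    by rewrite !valmkYs; apply: imset_disj; apply: disjYY_disj.
  - move=> h0; apply/setP => t; rewrite !inE; apply/negP => ht.
    have := indep_nadj hI ht h0; rewrite adj_disj //.
    by rewrite valmkXs /=; apply: Xs_G.
have E : \sum_(v in I) y s v = al * #|S|%:R + be * (#|T0|%:R + #|T1|%:R) + ga * (v0 \in I)%:R.
  rewrite !big_split /= -!mulr_sumr sum_in_card sumC_in big_bool /= !sum_in_card sum_in.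
  by rewrite [#|T0|%:R + _]addrC.
rewrite E.
have hq := qpos; have hw := wposR.
have hqw : (0 : R) < q%:R * w%:R by rewrite mulr_gt0.
have hqe : ((q - e)%:R : R) = q%:R - e%:R by rewrite natrB // ltnW // Heq.
move: key; rewrite -(ler_nat R) !natrD !natrM hqe => key.
rewrite -(ler_pM2r hqw) mul1r.
apply: le_trans key; rewrite le_eqVlt; apply/orP; left; apply/eqP.
rewrite /al /be /ga hqe.
have wn0 : (w%:R : R) != 0 by rewrite gt_eqF.
have qn0 : (q%:R : R) != 0 by rewrite gt_eqF.
field.
by rewrite qn0 wn0.
Qed.

Definition N : {set kvert p q} := [set v : kvert p q | [disjoint val v & fq]].

Lemma ndisj (T : finType) (A B : {set T}) x : x \in A -> x \in B -> ~~ [disjoint A & B].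
Proof. by move=> ha hb; apply/negP => d; exact: disjPn d ha hb. Qed.

Lemma y_N (s : {perm 'I_p}) : s \in G -> \sum_(v in N) y s v = 1.
Proof.
move=> hs.
rewrite !big_split /= -!mulr_sumr sum_in_card sumC_in big_bool /= !sum_in_card sum_in.
have -> : [set t | mk (s @: Xs t) \in N] = setT.
  by apply/setP => t; rewrite !inE valmkXs Xs_G.
have Y0 : forall b, [set t | mk (s @: Ys b t) \in N] = set0.
  move=> b; apply/setP => t; rewrite !inE valmkYs.
  have [x hx] := half_n0 b.
  have xq : (x < q)%N by exact: half_lt hx.
  apply/negbTE; apply: (ndisj (x := x)); last by rewrite inE.
  by apply/imsetP; exists x; [rewrite inE hx | rewrite (GP hs xq)].
rewrite !Y0 !cards0 cardsT card_ord.
have -> : (v0 \in N) = false.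
  rewrite inE /=; have : (0 < #|fq|)%N by rewrite card_fq; lia.
  by case/card_gt0P => x hx; apply/negbTE; apply: (ndisj hx hx).
have wn0 : (w%:R : R) != 0 by rewrite gt_eqF // wposR.
by rewrite /al mulVf // /= addr0 !mulr0 !addr0.
Qed.

Lemma G1 : (1%g : {perm 'I_p}) \in G.
Proof. by rewrite inE; apply/forallP => i; rewrite perm1 eqxx implybT. Qed.

Lemma GMr (s t : {perm 'I_p}) : t \in G -> ((s * t)%g \in G) = (s \in G).
Proof.
move=> ht; apply/idP/idP => H.
  rewrite inE; apply/forallP => i; apply/implyP => hi; apply/eqP.
  have := GP H hi; rewrite permM => E; apply: (@perm_inj _ t).
  by rewrite E (GP ht hi).
rewrite inE; apply/forallP => i; apply/implyP => hi; apply/eqP.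
by rewrite permM (GP H hi) (GP ht hi).
Qed.

Definition act (t : {perm 'I_p}) (v : kvert p q) : kvert p q := mk (t @: val v).

Lemma mk_eq (X Y : {set 'I_p}) : #|X| = q -> #|Y| = q -> (mk X == mk Y) = (X == Y).
Proof. move=> hX hY; apply/eqP/eqP => [E|->] //; by rewrite -(mkK hX) -(mkK hY) E. Qed.

Lemma key_eq (t : {perm 'I_p}) v (A : {set 'I_p}) : #|A| = q ->
  (act t v == mk (t @: A)) = (v == mk A).
Proof.
move=> hA; rewrite /act mk_eq ?card_pimset //; last by rewrite (eqP (valP v)).
rewrite (inj_eq (imset_inj (@perm_inj _ t))); apply/eqP/eqP => [E|->]; last exact: mkK.
by rewrite -E /mk valKd.
Qed.

Lemma imsetM (s t : {perm 'I_p}) (A : {set 'I_p}) : (s * t)%g @: A = t @: (s @: A).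
Proof. by rewrite -imset_comp; apply: eq_imset => x; rewrite permM. Qed.

Lemma G_fq (t : {perm 'I_p}) : t \in G -> t @: fq = fq.
Proof.
move=> ht; rewrite -[RHS]imset_id; apply: eq_in_imset => x; rewrite /fq /firstq inE => hx.
exact: (GP ht hx).
Qed.

Lemma y_act (s t : {perm 'I_p}) v : t \in G -> y (s * t)%g (act t v) = y s v.
Proof.
move=> ht; rewrite /y.
have -> : (act t v == v0) = (v == v0).
  have e0 : v0 = mk fq by rewrite /mk -[fq]/(val v0) valKd.
  by rewrite e0 -{1}(G_fq ht) key_eq // card_fq.
congr (_ * _ + _ * _ + _).
  by apply: eq_bigr => u _; rewrite imsetM key_eq // card_pimset card_Xs.
apply: eq_bigr => b _; apply: eq_bigr => u _.
by rewrite imsetM key_eq // card_pimset card_Ys.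
Qed.

Definition xx (v : kvert p q) : R := (#|G|%:R)^-1 * \sum_(s in G) y s v.

Lemma xx_act t v : t \in G -> xx (act t v) = xx v.
Proof.
move=> ht; rewrite /xx (reindex_inj (mulIg t)) /=; congr (_ * _).
rewrite (eq_bigl (fun s => s \in G)) => [|s]; last by rewrite /= GMr.
by apply: eq_bigr => s _; rewrite y_act.
Qed.

Lemma fq_notin (x : 'I_p) (A : {set 'I_p}) : [disjoint A & fq] -> x \in A -> (q <= x)%N.
Proof.
move=> d hx; case: (leqP q x) => // hq; exfalso.
by apply: (disjPn d hx); rewrite /fq /firstq inE.
Qed.

Lemma trans_ex k : forall A B : {set 'I_p}, #|A :\: B| = k -> #|A| = #|B| ->
  [disjoint A & fq] -> [disjoint B & fq] -> exists2 t, t \in G & t @: A = B.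
Proof.
elim: k => [|k IH] A B hk hAB dA dB.
  exists 1%g; first exact: G1.
  have sub : A \subset B by rewrite -setD_eq0 -cards_eq0 hk.
  have AB : A = B by apply/eqP; rewrite eqEcard sub hAB leqnn.
  by rewrite AB -[RHS]imset_id; apply: eq_imset => x; rewrite perm1.
have : (0 < #|A :\: B|)%N by rewrite hk.
case/card_gt0P => a ha.
have hBA : #|B :\: A| = k.+1.
  by rewrite cardsD setIC -hAB -cardsD.
have : (0 < #|B :\: A|)%N by rewrite hBA.
case/card_gt0P => b hb.
move: (ha) (hb); rewrite !inE => /andP[aB aA] /andP[bA bB].
have aq := fq_notin dA aA; have bq := fq_notin dB bB.
set t := tperm a b.
have memt : forall x, (x \in t @: A) = (t x \in A).
  move=> x; apply/imsetP/idP => [[y hy ->]|hx]; first by rewrite tpermK.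
  by exists (t x) => //; rewrite tpermK.
have tG : t \in G.
  rewrite inE; apply/forallP => i; apply/implyP => hi; apply/eqP.
  rewrite /t tpermD //; apply/eqP => E; move: hi; rewrite -E; lia.
have hk' : #|t @: A :\: B| = k.
  have -> : t @: A :\: B = (A :\: B) :\ a.
    apply/setP => x; rewrite !inE memt.
    case: (eqVneq x a) => [->|xa]; first by rewrite tpermL (negbTE bA) andbF.
    case: (eqVneq x b) => [->|xb]; first by rewrite bB.
    by rewrite /t tpermD // eq_sym.
  by move: hk; rewrite (cardsD1 a) ha add1n => -[].
have dA' : [disjoint t @: A & fq].
  apply: disjP => x; rewrite memt /fq /firstq inE => hx hxq.
  have := fq_notin dA hx.
  rewrite /t tpermD; first lia.
    by apply/eqP => E; move: hxq; rewrite -E; lia.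
  by apply/eqP => E; move: hxq; rewrite -E; lia.
have [t' t'G Et'] := IH _ B hk' (etrans (card_pimset _ _) hAB) dA' dB.
exists (t * t')%g; first by rewrite GMr.
by rewrite imsetM Et'.
Qed.

Lemma N_card : #|N| = 'C(p - q, q).
Proof.
rewrite -(card_imset _ val_inj).
rewrite (_ : val @: N = [set A : {set 'I_p} | A \subset ~: fq & #|A| == q]).
  rewrite cards_draws; congr 'C(_, _); have := cardsC fq; rewrite card_fq card_ord; lia.
apply/setP => A; rewrite inE; apply/imsetP/andP => [[v hv ->]|[hA hc]].
  split; last exact: (valP v).
  by rewrite -disjoints_subset; move: hv; rewrite inE.
have cA : #|A| = q by exact/eqP.
exists (mk A); last by rewrite mkK.
by rewrite inE mkK // disjoints_subset.
Qed.

Lemma sumC2 (I J : finType) (A : {set I}) (B : {set J}) (F : I -> J -> R) :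
  \sum_(i in A) \sum_(j in B) F i j = \sum_(j in B) \sum_(i in A) F i j.
Proof. exact: exchange_big. Qed.

Lemma Gpos : (0 : R) < #|G|%:R.
Proof. by rewrite ltr0n; apply/card_gt0P; exists 1%g; exact: G1. Qed.

Lemma xx_N_sum : \sum_(v in N) xx v = 1.
Proof.
rewrite /xx -mulr_sumr sumC2 (eq_bigr (fun _ => 1)) => [|s hs]; last exact: y_N.
by rewrite sumr_const mulVf // gt_eqF // Gpos.
Qed.

Lemma xx_N v : v \in N -> xx v = ('C(p - q, q)%:R)^-1.
Proof.
move=> hv.
have Eq : forall u, u \in N -> xx u = xx v.
  move=> u hu.
  have cv : #|val v| = q by exact/eqP/(valP v).
  have cu : #|val u| = q by exact/eqP/(valP u).
  have dv : [disjoint val v & fq] by move: hv; rewrite inE.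
  have du : [disjoint val u & fq] by move: hu; rewrite inE.
  have [t tG Et] := trans_ex erefl (etrans cv (esym cu)) dv du.
  have <- : act t v = u by rewrite /act Et /mk valKd.
  exact: xx_act.
have := xx_N_sum; rewrite (eq_bigr (fun _ => xx v)) // sumr_const N_card => H.
have Cn0 : ('C(p - q, q)%:R : R) != 0.
  by rewrite pnatr_eq0 -lt0n bin_gt0; lia.
by apply: (mulIf Cn0); rewrite mulVf // mulr_natr H.
Qed.
Lemma xx_indep (I : {set kvert p q}) : kindependent I -> \sum_(v in I) xx v <= 1.
Proof.
move=> hI; rewrite /xx -mulr_sumr sumC2.
have le : \sum_(s in G) \sum_(v in I) y s v <= \sum_(s in G) (1 : R).
  by apply: ler_sum => s hs; apply: y_indep.
rewrite sumr_const in le.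
rewrite mulrC ler_pdivrMr ?Gpos // mul1r; apply: le_trans le _.
by rewrite -mulr_natr mul1r.
Qed.

Lemma xx_sum : \sum_v xx v = p%:R / q%:R.
Proof.
rewrite /xx -mulr_sumr exchange_big /= (eq_bigr (fun _ => p%:R / q%:R)) => [|s _]; last exact: sum_y.
rewrite sumr_const -[p%:R / q%:R *+ #|G|]mulr_natl.
have Gn0 : (#|G|%:R : R) != 0 by rewrite gt_eqF // Gpos.
have qn0 : (q%:R : R) != 0 by rewrite gt_eqF // qpos.
by field; rewrite Gn0 qn0.
Qed.

Lemma xx_ge0 v : 0 <= xx v.
Proof. rewrite /xx mulr_ge0 ?invr_ge0 ?ler0n // sumr_ge0 // => s _; exact: y_ge0. Qed.

Lemma xx_le1 v : xx v <= 1.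
Proof.
have := @xx_indep [set v]; rewrite big_set1; apply.
apply/forallP => u; apply/implyP; rewrite inE => /eqP ->.
apply/forallP => u'; apply/implyP; rewrite inE => /eqP ->.
by rewrite /kadj eqxx.
Qed.
End Kneser.

Local Open Scope ring_scope.

Theorem mainTheorem13 (R : realFieldType) (p q : nat) :
  (0 < p)%N -> (0 < q)%N -> ~~ odd q ->
  (5 * q <= 2 * p)%N -> (p < 3 * q)%N ->
  exists x : kvert p q -> R,
    [/\ fractional_clique x,
        weight x = p%:R / q%:R &
        forall v : kvert p q, [disjoint val v & firstq p q] ->
          x v = ('C(p - q, q))%:R^-1].
Proof.
case: p => [//|n] _ q0 oq h5 h3.
pose h := q./2.
have Hq : q = (h + h)%N.
  by rewrite /h addnn; move: (odd_double_half q); rewrite (negbTE oq) add0n.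
have Hh : (0 < h)%N by lia.
exists (xx Hq Hh h5 h3 R); split.
- split.
    by move=> v; apply/andP; split; [exact: xx_ge0 | exact: xx_le1].
  by move=> I; exact: xx_indep.
- exact: xx_sum.
- by move=> v hv; apply: xx_N; rewrite inE.
Qed.
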